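(* For all $x\in\mathbb{C}$ and all integers $m$ and $n$ with $n\ge0$, \[ \sum_{k=0}^n x^k\big(F_mL_{mk}+(xL_m-2)F_{m(k+1)}\big)=x^{n+1}L_mF_{m(n+1)} \] and \[ \sum_{k=0}^n x^k\big(5F_mF_{mk}+(xL_m-2)L_{m(k+1)}\big)=L_m\big(x^{n+1}L_{m(n+1)}-2\big). \]
   Context: $F_n$ and $L_n$ are the Fibonacci and Lucas numbers: $F_0=0$, $F_1=1$, $L_0=2$, $L_1=1$, $W_n=W_{n-1}+W_{n-2}$, extended to negative indices by $F_{-n}=(-1)^{n-1}F_n$ and $L_{-n}=(-1)^nL_n$. *)

(* Defs.v *)
From mathcomp Require Import all_boot all_order all_algebra.
From mathcomp Require Import complex.
From mathcomp Require Import Rstruct.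
From Stdlib Require Import Reals.
Set Implicit Arguments. Unset Strict Implicit. Unset Printing Implicit Defensive.
Import Order.TTheory GRing.Theory Num.Theory.
Local Open Scope ring_scope.

Notation Cplx := (complex Rdefinitions.R).

Fixpoint fibn (n : nat) : int :=
  match n with
  | 0%N => 0
  | 1%N as n1 => 1
  | (n'.+1 as n1).+1 => fibn n1 + fibn n'
  end.

Fixpoint lucn (n : nat) : int :=
  match n with
  | 0%N => 2
  | 1%N => 1
  | (n'.+1 as n1).+1 => lucn n1 + lucn n'
  end.

(* Extension to negative indices: F_{-n} = (-1)^(n-1) F_n, L_{-n} = (-1)^n L_n. *)
Definition fib (z : int) : int :=
  match z with
  | Posz n => fibn n
  | Negz n => (-1) ^+ n * fibn n.+1   (* Negz n = -(n+1) *)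
  end.

Definition luc (z : int) : int :=
  match z with
  | Posz n => lucn n
  | Negz n => (-1) ^+ n.+1 * lucn n.+1
  end.

(* Main.v *)
Require Import Defs.
From mathcomp Require Import all_boot all_order all_algebra.
From mathcomp Require Import complex Rstruct.
From mathcomp Require Import zify ring.
Import GRing.Theory Num.Theory.
Local Open Scope ring_scope.

Definition isrec (h : int -> int) := forall z, h (z + 2) = h (z + 1) + h z.

Lemma rec_zero h : isrec h -> h 0 = 0 -> h 1 = 0 -> forall z, h z = 0.
Proof.
move=> Hr h0 h1.
have pos : forall n : nat, h n = 0 /\ h (n%:Z + 1) = 0.
  elim=> [|n [IH1 IH2]]; first by split.
  have -> : (n.+1)%:Z = n%:Z + 1 by lia.
  split => //.
  have -> : n%:Z + 1 + 1 = n%:Z + 2 by lia.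
  by rewrite Hr IH1 IH2.
have neg : forall n : nat, h (- n%:Z) = 0 /\ h (- n%:Z + 1) = 0.
  elim=> [|n [IH1 IH2]]; first by split.
  have E : h (- (n.+1)%:Z + 2) = h (- (n.+1)%:Z + 1) + h (- (n.+1)%:Z) by apply: Hr.
  have -> : - (n.+1)%:Z + 1 = - n%:Z by lia.
  split => //.
  have E2 : - (n.+1)%:Z + 2 = - n%:Z + 1 by lia.
  have E3 : - (n.+1)%:Z + 1 = - n%:Z by lia.
  rewrite E2 E3 IH1 IH2 in E.
  by rewrite add0r in E.
case=> n; first by case: (pos n).
rewrite NegzE; by case: (neg n.+1).
Qed.

Lemma fib_rec : isrec fib.
Proof.
case=> [n|[|[|k]]].
- have -> : Posz n + 2 = Posz n.+2 by lia.
  have -> : Posz n + 1 = Posz n.+1 by lia.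
  by [].
- by [].
- by [].
- have -> : Negz k.+2 + 2 = Negz k by rewrite !NegzE; lia.
  have -> : Negz k.+2 + 1 = Negz k.+1 by rewrite !NegzE; lia.
  rewrite /= !exprS; ring.
Qed.

Lemma luc_rec : isrec luc.
Proof.
case=> [n|[|[|k]]].
- have -> : Posz n + 2 = Posz n.+2 by lia.
  have -> : Posz n + 1 = Posz n.+1 by lia.
  by [].
- by [].
- by [].
- have -> : Negz k.+2 + 2 = Negz k by rewrite !NegzE; lia.
  have -> : Negz k.+2 + 1 = Negz k.+1 by rewrite !NegzE; lia.
  rewrite /= !exprS; ring.
Qed.

Lemma rec1 f : isrec f -> forall z, f (z + 1 + 1) = f (z + 1) + f z.
Proof. by move=> H z; rewrite -addrA H. Qed.

Lemma isrecE h : (forall z, h (z + 1 + 1) = h (z + 1) + h z) -> isrec h.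
Proof. by move=> H z; rewrite -H -addrA. Qed.

Lemma id1a a : luc a = 2 * fib (a + 1) - fib a.
Proof.
apply/eqP; rewrite -subr_eq0; apply/eqP.
pose h z := luc z - (2 * fib (z + 1) - fib z).
have: forall z, h z = 0.
  apply: rec_zero => //.
  apply: isrecE => z; rewrite /h !(@rec1 _ fib_rec) !(@rec1 _ luc_rec); ring.
by apply.
Qed.

Lemma id2a a : 2 * luc (a + 1) = luc a + 5 * fib a.
Proof.
apply/eqP; rewrite -subr_eq0; apply/eqP.
pose h z := 2 * luc (z + 1) - (luc z + 5 * fib z).
have: forall z, h z = 0.
  apply: rec_zero => //.
  apply: isrecE => z; rewrite /h !(@rec1 _ fib_rec) !(@rec1 _ luc_rec); ring.
by apply.
Qed.

Lemma addF a b : 2 * fib (a + b) = fib a * luc b + luc a * fib b.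
Proof.
apply/eqP; rewrite -subr_eq0; apply/eqP; move: b.
pose h z := 2 * fib (a + z) - (fib a * luc z + luc a * fib z).
have: forall z, h z = 0.
  apply: rec_zero.
  - apply: isrecE => z; rewrite /h !addrA !(@rec1 _ fib_rec) !(@rec1 _ luc_rec); ring.
  - rewrite /h addr0 /=; ring.
  - rewrite /h (id1a a) /=; ring.
by [].
Qed.

Lemma addL a b : 2 * luc (a + b) = luc a * luc b + 5 * fib a * fib b.
Proof.
apply/eqP; rewrite -subr_eq0; apply/eqP; move: b.
pose h z := 2 * luc (a + z) - (luc a * luc z + 5 * fib a * fib z).
have: forall z, h z = 0.
  apply: rec_zero.
  - apply: isrecE => z; rewrite /h !addrA !(@rec1 _ fib_rec) !(@rec1 _ luc_rec); ring.
  - rewrite /h addr0 /=; ring.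
  - rewrite /h (id2a a) /=; ring.
by [].
Qed.

Lemma intB' (R : comRingType) (a b : int) : (a - b)%:~R = a%:~R - b%:~R :> R.
Proof. by rewrite intrD intrN. Qed.

Theorem proposition2 (x : Cplx) (m : int) (n : nat) :
  \sum_(0 <= k < n.+1)
      x ^+ k * ((fib m * luc (m * k%:Z))%:~R
                + (x * (luc m)%:~R - 2) * (fib (m * (k%:Z + 1)))%:~R)
    = x ^+ n.+1 * (luc m * fib (m * (n%:Z + 1)))%:~R
  /\
  \sum_(0 <= k < n.+1)
      x ^+ k * ((5 * fib m * fib (m * k%:Z))%:~R
                + (x * (luc m)%:~R - 2) * (luc (m * (k%:Z + 1)))%:~R)
    = (luc m)%:~R * (x ^+ n.+1 * (luc (m * (n%:Z + 1)))%:~R - 2).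
Proof.
have Em : forall k : nat, m * (k%:Z + 1) = m + m * k%:Z.
  by move=> k; rewrite mulrDr mulr1 addrC.
have Ek : forall k : nat, (k.+1)%:Z = k%:Z + 1 by move=> k; lia.
split.
- pose f k := x ^+ k * (luc m * fib (m * k%:Z))%:~R.
  transitivity (\sum_(0 <= k < n.+1) (f k.+1 - f k)).
    apply: eq_big_nat => k _.
    have E : fib m * luc (m * k%:Z) = 2 * fib (m * (k%:Z + 1)) - luc m * fib (m * k%:Z).
      by rewrite Em addF; ring.
    rewrite /f E Ek !intB' !intrM exprS; ring.
  by rewrite telescope_sumr // /f mulr0 /= Ek mulr0 mulr0 subr0.
- pose f k := x ^+ k * (luc m * luc (m * k%:Z))%:~R.
  transitivity (\sum_(0 <= k < n.+1) (f k.+1 - f k)).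
    apply: eq_big_nat => k _.
    have E : 5 * fib m * fib (m * k%:Z) = 2 * luc (m * (k%:Z + 1)) - luc m * luc (m * k%:Z).
      by rewrite Em addL; ring.
    rewrite /f E Ek !intB' !intrM exprS; ring.
  rewrite telescope_sumr // /f mulr0 /= Ek expr0 mul1r intrM; ring.
Qed.
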